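(* For every integer $n\geq 0$, \[ \overline{p}(n)\equiv (-1)^{n}\,\overline{p}(4n)\pmod{8}. \]
   Context: An overpartition of a nonnegative integer $n$ is a partition of $n$ in which the first occurrence of each distinct part may be overlined. $\overline{p}(n)$ denotes the number of overpartitions of $n$, with $\overline{p}(0)=1$; equivalently $\sum_{n\ge0}\overline{p}(n)q^n=\prod_{k\ge1}\frac{1+q^k}{1-q^k}$. *)

(* Defs.v *)
From mathcomp Require Import all_boot.
Set Implicit Arguments. Unset Strict Implicit. Unset Printing Implicit Defensive.

(* A partition of n is encoded by its multiplicity function:
   m i = number of parts equal to i.+1, for i : 'I_n (parts lie in 1..n,
   each multiplicity is at most n).  An overpartition is a partition together
   with, for each distinct part, a choice of whether its first occurrence is
   overlined; hence each partition with d distinct parts gives 2^d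
   overpartitions. *)
Definition is_partition_mult (n : nat) (m : {ffun 'I_n -> 'I_n.+1}) : bool :=
  \sum_(i < n) (i.+1 * m i) == n.

Definition num_distinct_parts (n : nat) (m : {ffun 'I_n -> 'I_n.+1}) : nat :=
  #|[pred i : 'I_n | 0 < m i]|.

Definition overpartition (n : nat) : nat :=
  \sum_(m : {ffun 'I_n -> 'I_n.+1} | is_partition_mult m)
     2 ^ num_distinct_parts m.

(* Main.v *)
Require Import Defs.
From mathcomp Require Import all_boot all_algebra.
From mathcomp Require Import zify ring.
Import GRing.Theory.


Lemma sum_sym N (K : nat -> nat -> nat) : (forall i j, K i j = K j i) ->
  \sum_(i<N) \sum_(j<N) K i j = 2 * \sum_(j<N) \sum_(i<j) K i j + \sum_(i<N) K i i.
Proof.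
move=> HK; elim: N => [|N IH]; first by rewrite !big_ord0.
rewrite big_ord_recr /= (big_ord_recr N (fun j => \sum_(i < j) K i j)) /=.
rewrite (big_ord_recr N (fun i => K i i)) /= big_ord_recr /=.
rewrite (eq_bigr (fun i : 'I_N => \sum_(j<N) K i j + K i N)); last first.
  by move=> i _; rewrite big_ord_recr.
rewrite big_split /= IH.
rewrite (eq_bigr (fun j : 'I_N => K j N) (fun j _ => HK N j)).
set A := \sum_(j < N) \sum_(i < j) K i j.
set B := \sum_(i<N) K i N. set C := \sum_(i<N) K i i.
lia.
Qed.

Lemma sum_split2 N (F : nat -> nat) :
  \sum_(c < 2*N) F c = \sum_(c<N) F (2*c) + \sum_(c<N) F (2*c+1).
Proof.
elim: N => [|N IH]; first by rewrite !big_ord0.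
rewrite (_ : 2 * N.+1 = (2*N).+2); last by lia.
rewrite !big_ord_recr /= IH addn1.
set A := \sum_(c < N) F (2 * c). set B := \sum_(c < N) F (2 * c + 1).
lia.
Qed.

Lemma sum_widen M N (F : nat -> nat) : M <= N -> (forall c, M <= c -> F c = 0) ->
  \sum_(c<N) F c = \sum_(c<M) F c.
Proof.
move=> HMN HF; rewrite (big_ord_widen _ F HMN) [RHS]big_mkcond.
apply: eq_bigr => i _; case: ifP => // /negbT; rewrite -leqNgt => /HF ->.
done.
Qed.

Lemma sum_eq1 N c : c < N -> \sum_(a<N) ((a == c :> nat) : nat) = 1.
Proof.
move=> H; rewrite (bigD1 (Ordinal H)) //= eqxx big1 // => i Hi.
have : (i : nat) != c by apply: contra Hi => /eqP h; apply/eqP; apply: val_inj.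
by move/negbTE->.
Qed.

Lemma sum_collapse N s m : 0 < s -> 0 < m -> m <= N ->
  \sum_(a<N) ((a.+1 * s == m) : nat) = (s %| m).
Proof.
move=> Hs Hm HmN; case: (boolP (s %| m)) => Hd.
  have Hk : m = (m %/ s) * s by rewrite divnK.
  have Hk0 : 0 < m %/ s by rewrite divn_gt0 // dvdn_leq.
  transitivity (\sum_(a<N) ((a == (m %/ s).-1 :> nat) : nat)); last first.
    rewrite sum_eq1 //; have := leq_div m s; lia.
  apply: eq_bigr => a _; congr nat_of_bool.
  rewrite {1}Hk eqn_pmul2r //; lia.
apply: big1 => a _; case: eqP => // Ha; move: Hd; rewrite -Ha dvdn_mull //.
Qed.

Lemma sum_lt N d : d <= N -> \sum_(v<N) ((v < d) : nat) = d.
Proof.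
move=> H; rewrite (eq_bigr (fun v : 'I_N => if v < d then 1 else 0)); last first.
  by move=> v _; case: (_ < _).
rewrite -big_mkcond -(big_ord_widen _ (fun _ => 1)) //.
by rewrite sum1_card card_ord.
Qed.

Lemma sum_shift M v (g : nat -> nat) : (forall d, M <= d -> g d = 0) ->
  \sum_(w<M) g (v.+1 + w) = \sum_(d<M) (v < d) * g d.
Proof.
move=> Hg; case: (ltnP v M) => Hv; last first.
  rewrite big1; last by move=> w _; apply: Hg; lia.
  rewrite big1 // => d _; have Hd := ltn_ord d; rewrite (_ : (v < d) = false) //.
  by apply/negbTE/negP => ?; lia.
rewrite -(big_mkord (fun _ => true) (fun w => g (v.+1 + w))).
rewrite -(big_mkord (fun _ => true) (fun d => (v < d) * g d)).
rewrite [RHS](big_cat_nat _ (n:=v.+1)) //=.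
rewrite [X in X + _]big1_seq; last first.
  move=> d; rewrite mem_index_iota => /andP [_ Hd]; rewrite (_ : (v < d) = false) //.
  by apply/negbTE/negP => ?; lia.
rewrite (big_cat_nat _ (n:=M - v.+1) (m:=0) (p:=M)) //=; last by lia.
rewrite [X in _ + X]big1_seq; last first.
  move=> d /andP [_]; rewrite mem_index_iota => /andP [Hd _]; apply: Hg; lia.
rewrite add0n addn0.
have := big_addn 0 M v.+1 (fun _ => true) (fun i => (v<i) * g i).
rewrite add0n => ->.
apply: eq_big_seq => d _.
rewrite (_ : v < d + v.+1 = true); last by apply/idP; lia.
by rewrite mul1n addnC.
Qed.


Definition K m i j := \sum_(v<m) \sum_(w<m) ((i.+1*v.+1 + j.+1*w.+1 == m) : nat).
Definition tau m := \sum_(i<m) \sum_(v<m) ((i.+1 * v.+1 == m) : nat).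
Definition X2 m := \sum_(j<m) \sum_(i<j) K m i j.
Definition Q m := \sum_(i<m) \sum_(j<m) K m i j.
Definition D m := \sum_(i<m) K m i i.
Definition sq m := \sum_(a<m) ((a.+1 * a.+1 == m) : nat).
Definition rr m := \sum_(a<m) \sum_(b<m) ((a.+1*a.+1 + b.+1*b.+1 == m) : nat).
Definition sig N m := \sum_(c<N) (c.+1 %| m) * c.+1.

Lemma K_sym m i j : K m i j = K m j i.
Proof.
rewrite /K exchange_big; apply: eq_bigr => w _; apply: eq_bigr => v _.
by rewrite addnC.
Qed.

Lemma Q_eq m : Q m = 2 * X2 m + D m.
Proof. by rewrite /Q sum_sym //; apply: K_sym. Qed.

Lemma tau_sq m : exists t, tau m = 2 * t + sq m.
Proof.
eexists; rewrite /tau (sum_sym _ (fun i v => ((i.+1 * v.+1 == m) : nat))) //.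
by move=> i j; rewrite mulnC.
Qed.

Lemma Q_rr m : exists y, Q m = 4 * y + rr m.
Proof.
pose c t := \sum_(j<m) \sum_(w<m) ((t + j.+1*w.+1 == m) : nat).
pose al t := \sum_(w<m) \sum_(j<w) ((t + j.+1*w.+1 == m) : nat).
pose be t := \sum_(j<m) ((t + j.+1*j.+1 == m) : nat).
have Hc t : c t = 2 * al t + be t.
  by rewrite /c (sum_sym _ (fun j w => ((t + j.+1*w.+1 == m) : nat))) // => i j; rewrite mulnC.
have E1 : Q m = \sum_(i<m) \sum_(v<m) c (i.+1 * v.+1).
  rewrite /Q /K; apply: eq_bigr => i _; rewrite exchange_big.
  by apply: eq_bigr => v _.
rewrite E1 (sum_sym _ (fun i v => c (i.+1 * v.+1))); last by move=> i j; rewrite mulnC.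
under eq_bigr do under eq_bigr do rewrite Hc.
under [X in _ + X]eq_bigr do rewrite Hc.
have Hb : \sum_(v<m) \sum_(i<v) be (i.+1 * v.+1) = \sum_(i<m) al (i.+1 * i.+1).
  rewrite /be /al [RHS]exchange_big; apply: eq_bigr => w _.
  rewrite [RHS]exchange_big; apply: eq_bigr => j _; apply: eq_bigr => k _.
  by rewrite addnC.
rewrite big_split /= -big_distrr /=.
under eq_bigr do rewrite big_split /= -big_distrr /=.
rewrite big_split /= -big_distrr /= Hb.
have Hr : \sum_(i<m) be (i.+1 * i.+1) = rr m by [].
rewrite Hr.
set A := \sum_(i < m) _. set B := \sum_(i < m) _.
exists (B + A).
lia.
Qed.


Lemma tau_div m : 0 < m -> tau m = \sum_(i<m) (i.+1 %| m).
Proof.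
move=> Hm; apply: eq_bigr => i _.
rewrite -(@sum_collapse m i.+1 m _ Hm (leqnn m)) //.
by apply: eq_bigr => v _; rewrite mulnC.
Qed.

Lemma D_tau m : 0 < m -> D m + tau m = sig m m.
Proof.
move=> Hm.
pose g d := (d.+1 %| m) : nat.
have Hg : forall d, m <= d -> g d = 0.
  move=> d Hd; rewrite /g; case: (boolP (d.+1 %| m)) => // /dvdn_leq.
  move=> /(_ Hm) ?; lia.
have E1 : D m = \sum_(d<m) d * g d.
  rewrite /D /K.
  transitivity (\sum_(v<m) \sum_(w<m) \sum_(i<m) ((i.+1 * (v.+1 + w).+1 == m) : nat)).
    rewrite exchange_big; apply: eq_bigr => v _; rewrite exchange_big.
    apply: eq_bigr => w _; apply: eq_bigr => i _.
    by rewrite -mulnDr addnS addSn.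
  transitivity (\sum_(v<m) \sum_(d<m) (v < d) * g d).
    apply: eq_bigr => v _; rewrite -sum_shift //; apply: eq_bigr => w _.
    by rewrite sum_collapse.
  rewrite exchange_big; apply: eq_bigr => d _.
  by rewrite -big_distrl /= sum_lt // ltnW.
rewrite E1 tau_div // /sig -big_split /=; apply: eq_bigr => d _.
rewrite /g; lia.
Qed.


Lemma odd_ne x y n : (2*x).+1*(2*x).+1 + y*y != 4*n.
Proof.
have := odd_double_half y; rewrite -mul2n; case: (odd y) => /= <-;
  apply/eqP; nia.
Qed.

Lemma sq4 n : 0 < n -> sq (4*n) = sq n.
Proof.
move=> Hn; rewrite /sq.
have -> : \sum_(a < 4*n) ((a.+1*a.+1 == 4*n) : nat) =
          \sum_(a < 2*(2*n)) ((a.+1*a.+1 == 4*n) : nat).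
  by rewrite (_ : 2*(2*n) = 4*n) //; lia.
rewrite (sum_split2 _ (fun a => ((a.+1*a.+1 == 4*n) : nat))) big1 ?add0n; last first.
  move=> a _; apply/eqP; rewrite eqb0; have := odd_ne a 0 n.
  by rewrite muln0 addn0.
transitivity (\sum_(a < 2*n) ((a.+1*a.+1 == n) : nat)).
  apply: eq_bigr => a _; congr nat_of_bool; apply/eqP/eqP; nia.
apply: (@sum_widen n (2*n) (fun a => ((a.+1*a.+1 == n) : nat))); first lia.
move=> c Hc; apply/eqP; rewrite eqb0; apply/eqP; nia.
Qed.

Lemma rr4 n : 0 < n -> rr (4*n) = rr n.
Proof.
move=> Hn; rewrite /rr.
have -> : \sum_(a < 4*n) \sum_(b < 4*n) ((a.+1*a.+1 + b.+1*b.+1 == 4*n) : nat) =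
          \sum_(a < 2*(2*n)) \sum_(b < 2*(2*n)) ((a.+1*a.+1 + b.+1*b.+1 == 4*n) : nat).
  by rewrite (_ : 2*(2*n) = 4*n) //; lia.
under eq_bigr do rewrite (sum_split2 _ (fun b => ((_.+1*_.+1 + b.+1*b.+1 == 4*n) : nat))).
under eq_bigr => a _.
  rewrite [X in X + _]big1 ?add0n; last first.
    by move=> b _; apply/eqP; rewrite eqb0 addnC; apply: odd_ne.
  over.
rewrite (sum_split2 _ (fun a => \sum_(b < 2 * n) ((a.+1*a.+1 + (2*b+1).+1*(2*b+1).+1 == 4*n) : nat))).
rewrite [X in X + _]big1 ?add0n; last first.
  move=> a _; apply: big1 => b _; apply/eqP; rewrite eqb0; apply: odd_ne.
transitivity (\sum_(a < 2*n) \sum_(b < 2*n) ((a.+1*a.+1 + b.+1*b.+1 == n) : nat)).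
  apply: eq_bigr => a _; apply: eq_bigr => b _.
  congr nat_of_bool; apply/eqP/eqP; nia.
rewrite (@sum_widen n (2*n) (fun a => \sum_(b < 2*n) ((a.+1*a.+1 + b.+1*b.+1 == n) : nat))); first last.
- move=> c Hc; apply: big1 => b _; apply/eqP; rewrite eqb0; apply/eqP; nia.
- lia.
apply: eq_bigr => a _.
apply: (@sum_widen n (2*n) (fun b => ((a.+1*a.+1 + b.+1*b.+1 == n) : nat))); first lia.
move=> c Hc; apply/eqP; rewrite eqb0; apply/eqP; nia.
Qed.

Lemma rr_odd n : odd n -> exists z, rr n = 2 * z.
Proof.
move=> Hn.
rewrite /rr (sum_sym _ (fun a b => ((a.+1*a.+1 + b.+1*b.+1 == n) : nat))); last first.
  by move=> i j; rewrite addnC.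
rewrite [X in _ + X]big1 ?addn0; first by eexists.
move=> a _; apply/eqP; rewrite eqb0; apply/eqP => H; move: Hn; rewrite -H addnn odd_double.
done.
Qed.


Definition Od N h := \sum_(c<N) ((2*c).+1 %| h) * (2*c).+1.
Definition Wd N h := \sum_(c<N) ((2*c+1).+1 %| h) * (2*c+1).+1.

Lemma sig_split N h : sig (2*N) h = Od N h + Wd N h.
Proof. exact: (sum_split2 _ (fun c => (c.+1 %| h) * c.+1)). Qed.

Lemma Wd2 N h : Wd N (2*h) = 2 * sig N h.
Proof.
rewrite /Wd /sig big_distrr /=; apply: eq_bigr => c _.
rewrite (_ : (2*c+1).+1 = 2 * c.+1); last by lia.
rewrite dvdn_pmul2l //; lia.
Qed.

Lemma Wd_odd N h : odd h -> Wd N h = 0.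
Proof.
move=> Hh; apply: big1 => c _.
rewrite (_ : (2*c+1).+1 = 2 * c.+1); last by lia.
case: (boolP (2 * c.+1 %| h)) => //= H.
have : 2 %| h := dvdn_trans (dvdn_mulr _ (dvdnn 2)) H.
by rewrite dvdn2 Hh.
Qed.

Lemma Wd_even N h : exists w, Wd N h = 2 * w.
Proof.
exists (\sum_(c<N) ((2*c+1).+1 %| h) * c.+1).
rewrite /Wd big_distrr /=; apply: eq_bigr => c _; lia.
Qed.

Lemma Od2 N h : Od N (2*h) = Od N h.
Proof.
apply: eq_bigr => c _; rewrite Gauss_dvdr // coprimen2 /=.
by rewrite mul2n odd_double.
Qed.

Lemma sig_widen N h : 0 < h -> h <= N -> sig N h = sig h h.
Proof.
move=> H0 HN; apply: (@sum_widen h N (fun c => (c.+1 %| h) * c.+1)) => // c Hc.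
case: (boolP (c.+1 %| h)) => // /(dvdn_leq H0) ?; lia.
Qed.

Lemma Od_widen N h : 0 < h -> h <= N -> Od N h = Od h h.
Proof.
move=> H0 HN; apply: (@sum_widen h N (fun c => ((2*c).+1 %| h) * (2*c).+1)) => // c Hc.
case: (boolP ((2*c).+1 %| h)) => // /(dvdn_leq H0) ?; lia.
Qed.

Lemma sig4 n : 0 < n -> sig (4*n) (4*n) = 3 * Od n n + 4 * sig n n.
Proof.
move=> Hn; rewrite (_ : 4*n = 2*(2*n)); last by lia.
rewrite sig_split Od2 Wd2 Od2 (@Od_widen (2*n) n) //; last by lia.
rewrite sig_split Od2 Wd2; lia.
Qed.

Lemma sig_oddn n : 0 < n -> odd n -> sig n n = Od n n.
Proof.
move=> Hn Ho; rewrite -(@sig_widen (2*n) n) //; last by lia.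
by rewrite sig_split Wd_odd // addn0.
Qed.

Lemma sig_evenn h : 0 < h -> exists w, sig (2*h) (2*h) = 3 * Od (2*h) (2*h) + 4 * w.
Proof.
move=> Hh; have [w Hw] := Wd_even h h.
exists w; rewrite sig_split Od2 Wd2 Od2 (@Od_widen (2*h) h) //; last by lia.
rewrite -(@sig_widen (2*h) h) //; last by lia.
rewrite sig_split Hw; lia.
Qed.

Open Scope ring_scope.

Lemma expand (R : comNzRingType) (b : nat -> R) N : exists S : R,
  \prod_(i<N) (1 + b i *+ 2) = 1 + (\sum_(i<N) b i) *+ 2
     + (\sum_(j<N) \sum_(i<j) b i * b j) *+ 4 + S *+ 8.
Proof.
elim: N => [|N [S IH]].
  by exists 0; rewrite !big_ord0 !mul0rn !addr0.
rewrite big_ord_recr /= IH (big_ord_recr N b) /=.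
rewrite (big_ord_recr N (fun j => \sum_(i < j) b i * b j)) /= -mulr_suml.
set e1 := \sum_(i < N) b i. set e2 := \sum_(i < N) \sum_(i0 < i) b i0 * b i.
exists (S + e2 * b N + S * b N *+ 2).
ring.
Qed.

Definition B m (i : nat) : {poly int} := \sum_(v < m) 'X^(i.+1 * v.+1).

Lemma pbar_coef m : ((overpartition m)%:R : int) = (\prod_(i < m) (1 + B m i *+ 2))`_m.
Proof.
pose W (v : nat) : nat := if (0 < v)%N then 2%N else 1%N.
have Hfac : forall i : 'I_m, 1 + B m i *+ 2 =
   \sum_(v < m.+1) ((W v)%:R *: 'X^(i.+1 * v)).
  move=> i; rewrite big_ord_recl /= muln0 expr0 scale1r; congr (_ + _).
  rewrite /B -sumrMnl; apply: eq_bigr => v _; rewrite /bump leq0n add1n /W /= scaler_nat //.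
rewrite (eq_bigr _ (fun i _ => Hfac i)) bigA_distr_bigA /= coef_sum.
rewrite /overpartition natr_sum big_mkcond /=.
apply: eq_bigr => f _.
rewrite scaler_prod prodrXr coefZ coefXn -natr_prod.
rewrite eq_sym /is_partition_mult.
case: (_ == _); rewrite ?mulr1 ?mulr0 //.
congr (_%:R).
rewrite -big_mkcond /= prod_nat_const.
done.
Qed.

Lemma coef_expand m : (0 < m)%N -> exists k : int,
  (\prod_(i<m) (1 + B m i *+ 2))`_m = (tau m)%:R *+ 2 + (X2 m)%:R *+ 4 + k *+ 8.
Proof.
move=> Hm; have [S ->] := @expand _ (B m) m; exists (S`_m).
rewrite coefD coefMn coefD coefMn coefD coefMn coef1 (_ : (m == 0%N) = false) ?add0r; last by case: m Hm.
congr (_ *+ 2 + _ *+ 4 + _).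
- rewrite coef_sum /tau natr_sum; apply: eq_bigr => i _.
  rewrite /B coef_sum natr_sum; apply: eq_bigr => v _.
  by rewrite coefXn eq_sym.
- rewrite /X2 coef_sum natr_sum; apply: eq_bigr => j _.
  rewrite coef_sum natr_sum; apply: eq_bigr => i _.
  rewrite /K /B mulr_suml coef_sum natr_sum; apply: eq_bigr => v _.
  rewrite mulr_sumr coef_sum natr_sum; apply: eq_bigr => w _.
  by rewrite -exprD coefXn eq_sym.
Qed.

Close Scope ring_scope.

Lemma mulrn_int (x : int) n : (x *+ n = x * n%:Z)%R.
Proof. by rewrite -mulr_natr natz. Qed.

Lemma key m : 0 < m -> exists k : int,
  ((overpartition m)%:Z = 4 * (sq m)%:Z + 2 * (rr m)%:Z - 2 * (sig m m)%:Z + 8 * k)%R.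
Proof.
move=> Hm; have [k1 Hk] := @coef_expand m Hm.
have := pbar_coef m; rewrite Hk => Hp.
have HQ := Q_eq m; have [y Hy] := Q_rr m; have HD := D_tau m Hm; have [t Ht] := tau_sq m.
exists (k1 + y%:Z + t%:Z)%R.
move: Hp; rewrite !mulrn_int => Hp.
lia.
Qed.

Theorem theorem1p2 (n : nat) :
  ((overpartition n)%:Z = (-1) ^+ n * (overpartition (4 * n))%:Z %[mod 8])%Z.
Proof.
case: (posnP n) => [->|Hn]; first by rewrite muln0 expr0 mul1r.
have [k1 E1] := key n Hn.
have H4 : 0 < 4 * n by lia.
have [k2 E2] := key (4*n) H4.
rewrite sq4 // rr4 // sig4 // in E2.
apply/eqP; rewrite eqz_mod_dvd; apply/dvdzP.
rewrite -signr_odd.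
case: (boolP (odd n)) => Ho.
  have [z Hz] := rr_odd n Ho.
  have Hs := sig_oddn n Hn Ho.
  rewrite expr1.
  exists ((sq n)%:Z + z%:Z - 2 * (sig n n)%:Z + k1 + k2)%R.
  rewrite E1 E2 Hz Hs; lia.
have Hh := odd_double_half n; rewrite (negbTE Ho) add0n -mul2n in Hh.
have Hh0 : 0 < n./2 by lia.
have [w Hw] := sig_evenn (n./2) Hh0.
rewrite Hh in Hw.
rewrite expr0.
exists (3 * (Od n n)%:Z + 3 * w%:Z + k1 - k2)%R.
rewrite E1 E2 Hw; lia.
Qed.
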